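(* Let $M$ be a smooth manifold with a symmetric affine connection $\nabla$, Riemann tensor $R_{abc}{}^d$ and Ricci tensor $R_{ab}$. Then $$\nabla_a\nabla_m R_{bce}{}^m + \nabla_{b}\nabla_m R_{cae}{}^m+\nabla_c\nabla_m R_{abe}{}^m = R_{am}R_{bce}{}^m + R_{bm}R_{cae}{}^m + R_{cm}R_{abe}{}^m .$$
   Context: Abstract index notation with Einstein summation. The connection has symmetric Christoffel symbols $\Gamma^c_{ab}$; $R_{abc}{}^d = \partial_a \Gamma_{bc}^d - \partial_b\Gamma_{ac}^d - \Gamma_{ac}^k\Gamma_{bk}^d + \Gamma_{ak}^d \Gamma_{bc}^k$ and $R_{ac}=R_{abc}{}^b$. *)

(* Defs.v *)
From HB Require Import structures.
From mathcomp Require Import all_boot all_order all_algebra.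
Set Implicit Arguments. Unset Strict Implicit. Unset Printing Implicit Defensive.
Import GRing.Theory.
Local Open Scope ring_scope.

(* A: the commutative ring of (smooth) scalar functions on a chart,
   d i = partial derivative d_i in coordinate i (i : 'I_n),
   Gam c a b = Christoffel symbol Gamma^c_{ab}. *)

Definition is_derivation (A : comRingType) (D : A -> A) : Prop :=
  (forall x y, D (x + y) = D x + D y) /\ (forall x y, D (x * y) = D x * y + x * D y).

Definition commuting_derivations (A : comRingType) (n : nat) (d : 'I_n -> A -> A) : Prop :=
  (forall i, is_derivation (d i)) /\ (forall i j x, d i (d j x) = d j (d i x)).

Definition symmetric_connection (A : comRingType) (n : nat) (Gam : 'I_n -> 'I_n -> 'I_n -> A) : Prop :=
  forall c a b, Gam c a b = Gam c b a.

(* Riem a b c e = R_{abc}^e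
   = d_a Gam^e_{bc} - d_b Gam^e_{ac} - Gam^k_{ac} Gam^e_{bk} + Gam^e_{ak} Gam^k_{bc} *)
Definition Riem (A : comRingType) (n : nat) (d : 'I_n -> A -> A)
  (Gam : 'I_n -> 'I_n -> 'I_n -> A) (a b c e : 'I_n) : A :=
  d a (Gam e b c) - d b (Gam e a c)
  - \sum_(k < n) Gam k a c * Gam e b k + \sum_(k < n) Gam e a k * Gam k b c.

Definition Ricci (A : comRingType) (n : nat) (d : 'I_n -> A -> A)
  (Gam : 'I_n -> 'I_n -> 'I_n -> A) (a c : 'I_n) : A :=
  \sum_(b < n) Riem d Gam a b c b.

Definition cov03 (A : comRingType) (n : nat) (d : 'I_n -> A -> A)
  (Gam : 'I_n -> 'I_n -> 'I_n -> A) (T : 'I_n -> 'I_n -> 'I_n -> A)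
  (a b c e : 'I_n) : A :=
  d a (T b c e)
  - \sum_(k < n) Gam k a b * T k c e
  - \sum_(k < n) Gam k a c * T b k e
  - \sum_(k < n) Gam k a e * T b c k.

Definition cov31 (A : comRingType) (n : nat) (d : 'I_n -> A -> A)
  (Gam : 'I_n -> 'I_n -> 'I_n -> A) (T : 'I_n -> 'I_n -> 'I_n -> 'I_n -> A)
  (a b c e f : 'I_n) : A :=
  d a (T b c e f)
  - \sum_(k < n) Gam k a b * T k c e f
  - \sum_(k < n) Gam k a c * T b k e f
  - \sum_(k < n) Gam k a e * T b c k f
  + \sum_(k < n) Gam f a k * T b c e k.

Definition divRiem (A : comRingType) (n : nat) (d : 'I_n -> A -> A)
  (Gam : 'I_n -> 'I_n -> 'I_n -> A) (b c e : 'I_n) : A :=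
  \sum_(m < n) cov31 d Gam (Riem d Gam) m b c e m.

(* Main.v *)
Require Import Defs.
From HB Require Import structures.
From mathcomp Require Import all_boot all_order all_algebra.
From Stdlib Require Import Ring.
Import GRing.Theory.
Local Open Scope ring_scope.


Section Main.
Variable A : comRingType.
Notation T1 := (Algebra.BaseAddMagma.sort (GRing_ComNzRing__to__Algebra_BaseAddMagma A)).
Lemma Aring : @ring_theory T1 (0:A) 1 +%R *%R (fun x y => x - y) -%R (@eq T1).
Proof. constructor => //; [exact: add0r|exact: addrC|exact: addrA|exact: mul1r|exact: mulrC|exact: mulrA|exact: mulrDl|exact: subrr]. Qed.
Add Ring Aring : Aring.
Lemma aE (x y : A) : @Algebra.add (GRing_ComNzRing__to__Algebra_BaseAddMagma A) x 0 = @Algebra.add (GRing_ComNzRing__to__Algebra_BaseAddMagma A) y 0 -> x = y. Proof. by rewrite !addr0. Qed.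
Ltac normops :=
  repeat match goal with |- context [@Algebra.add ?i] =>
     lazymatch i with GRing_ComNzRing__to__Algebra_BaseAddMagma A => fail | _ =>
     change (@Algebra.add i) with (@Algebra.add (GRing_ComNzRing__to__Algebra_BaseAddMagma A)) end end;
  repeat match goal with |- context [@Algebra.opp ?i] =>
     lazymatch i with GRing_ComNzRing__to__Algebra_BaseZmodule A => fail | _ =>
     change (@Algebra.opp i) with (@Algebra.opp (GRing_ComNzRing__to__Algebra_BaseZmodule A)) end end;
  repeat match goal with |- context [@Algebra.zero ?i] =>
     lazymatch i with GRing_ComNzRing__to__Algebra_BaseAddUMagma A => fail | _ =>
     change (@Algebra.zero i) with (@Algebra.zero (GRing_ComNzRing__to__Algebra_BaseAddUMagma A)) end end;
  repeat match goal with |- context [@GRing.mul ?i] =>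
     lazymatch i with GRing_ComNzRing__to__GRing_PzSemiRing A => fail | _ =>
     change (@GRing.mul i) with (@GRing.mul (GRing_ComNzRing__to__GRing_PzSemiRing A)) end end;
  match goal with |- @eq _ ?x ?y => change (@eq T1 x y) end.
Ltac aring := rewrite /=; apply: aE; normops; ring.

Variable n : nat.
Variable d : 'I_n -> A -> A.
Variable Gam : 'I_n -> 'I_n -> 'I_n -> A.
Hypothesis hd : commuting_derivations d.
Hypothesis hsym : symmetric_connection Gam.

Notation R := (Riem d Gam).

Lemma dD i x y : d i (x + y) = d i x + d i y. Proof. by case: hd => /(_ i) [] . Qed.
Lemma dM i x y : d i (x * y) = d i x * y + x * d i y. Proof. by case: hd => /(_ i) [] . Qed.
Lemma dC i j x : d i (d j x) = d j (d i x). Proof. by case: hd. Qed.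
Lemma d0 i : d i 0 = 0.
Proof. by apply: (addrI (d i 0)); rewrite -dD !addr0. Qed.
Lemma dN i x : d i (- x) = - d i x.
Proof. apply/eqP; rewrite -subr_eq0 opprK -dD addNr d0 //. Qed.
Lemma dB i x y : d i (x - y) = d i x - d i y. Proof. by rewrite dD dN. Qed.
Lemma d1 i : d i 1 = 0.
Proof. have h := dM i 1 1; rewrite !mul1r !mulr1 in h; by apply: (addrI (d i 1)); rewrite -h addr0. Qed.
Lemma dS i (F : 'I_n -> A) : d i (\sum_(k < n) F k) = \sum_(k < n) d i (F k).
Proof. exact: (big_morph (d i) (dD i) (d0 i)). Qed.

Definition cov01 (w : 'I_n -> A) a c := d a (w c) - \sum_(k < n) Gam k a c * w k.
Definition cov02 (U : 'I_n -> 'I_n -> A) a b c :=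
  d a (U b c) - \sum_(k < n) Gam k a b * U k c - \sum_(k < n) Gam k a c * U b k.

Lemma sumsplit (F G : 'I_n -> A) : \sum_(k<n) F k + \sum_(k<n) G k = \sum_(k<n) (F k + G k).
Proof. by rewrite big_split. Qed.
Lemma sumsub (F G : 'I_n -> A) : \sum_(k<n) F k - \sum_(k<n) G k = \sum_(k<n) (F k - G k).
Proof. by rewrite sumrB. Qed.


Section R1.
Variable w : 'I_n -> A.
Variable e : 'I_n.
Let Ssym b c := d b (d c (w e)) - \sum_(k<n) Gam k b c * cov01 w k e
   - \sum_(k<n) (Gam k c e * d b (w k) + Gam k b e * d c (w k)).
Let N b c := - \sum_(k<n) d b (Gam k c e) * w k
   + \sum_(k<n) \sum_(m<n) Gam k b e * (Gam m c k * w m).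

Lemma R1split b c : cov02 (cov01 w) b c e = Ssym b c + N b c.
Proof.
rewrite /cov02 {1}/cov01 dB dS /Ssym /N.
have E1 : \sum_(k<n) d b (Gam k c e * w k) = \sum_(k<n) d b (Gam k c e) * w k + \sum_(k<n) Gam k c e * d b (w k).
  by rewrite -big_split; apply: eq_bigr => k _; rewrite dM.
have E2 : \sum_(k<n) Gam k b e * cov01 w c k = \sum_(k<n) Gam k b e * d c (w k) - \sum_(k<n) \sum_(m<n) Gam k b e * (Gam m c k * w m).
  by rewrite -sumrB; apply: eq_bigr => k _; rewrite /cov01 mulrBr mulr_sumr.
rewrite E1 E2 big_split /=. aring.
Qed.

Lemma Ssym_sym b c : Ssym b c = Ssym c b.
Proof.
rewrite /Ssym dC.
have h1 : \sum_(k<n) Gam k b c * cov01 w k e = \sum_(k<n) Gam k c b * cov01 w k e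
  by apply: eq_bigr => k _; rewrite hsym.
have h2 : \sum_(k<n) (Gam k c e * d b (w k) + Gam k b e * d c (w k)) = \sum_(k<n) (Gam k b e * d c (w k) + Gam k c e * d b (w k))
  by apply: eq_bigr => k _; rewrite addrC.
by rewrite h1 h2.
Qed.

Lemma R1 b c : cov02 (cov01 w) b c e - cov02 (cov01 w) c b e = - \sum_(m<n) R b c e m * w m.
Proof.
rewrite !R1split Ssym_sym.
have X : \sum_(m<n) R b c e m * w m = \sum_(m<n) d b (Gam m c e) * w m - \sum_(m<n) d c (Gam m b e) * w m
   - \sum_(k<n) \sum_(m<n) Gam k b e * (Gam m c k * w m) + \sum_(k<n) \sum_(m<n) Gam k c e * (Gam m b k * w m).
  rewrite [\sum_(k<n) \sum_(m<n) Gam k b e * _]exchange_big [\sum_(k<n) \sum_(m<n) Gam k c e * _]exchange_big /=.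
  rewrite -!sumrB -big_split; apply: eq_bigr => m _.
  rewrite /Riem !mulrDl !mulNr !mulr_suml.
  have Y1 : \sum_(k<n) Gam k b e * Gam m c k * w m = \sum_(k<n) Gam k b e * (Gam m c k * w m)
    by apply: eq_bigr => k _; rewrite mulrA.
  have Y2 : \sum_(k<n) Gam m b k * Gam k c e * w m = \sum_(k<n) Gam k c e * (Gam m b k * w m)
    by apply: eq_bigr => k _; aring.
  rewrite Y1 Y2. aring.
rewrite X /N. aring.
Qed.
End R1.

Lemma RexpL a b c (V : 'I_n -> A) : \sum_(m<n) R a b c m * V m =
  \sum_(m<n) d a (Gam m b c) * V m - \sum_(m<n) d b (Gam m a c) * V m
  - \sum_(k<n) \sum_(m<n) Gam k a c * (Gam m b k * V m)
  + \sum_(k<n) \sum_(m<n) Gam k b c * (Gam m a k * V m).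
Proof.
rewrite [\sum_(k<n) \sum_(m<n) Gam k a c * _]exchange_big [\sum_(k<n) \sum_(m<n) Gam k b c * _]exchange_big /=.
rewrite -!sumrB -big_split; apply: eq_bigr => m _.
rewrite /Riem !mulrDl !mulNr !mulr_suml.
have Y1 : \sum_(k<n) Gam k a c * Gam m b k * V m = \sum_(k<n) Gam k a c * (Gam m b k * V m)
  by apply: eq_bigr => k _; rewrite mulrA.
have Y2 : \sum_(k<n) Gam m a k * Gam k b c * V m = \sum_(k<n) Gam k b c * (Gam m a k * V m)
  by apply: eq_bigr => k _; aring.
rewrite Y1 Y2. aring.
Qed.

Section R2.
Variable U : 'I_n -> 'I_n -> A.
Variables c e : 'I_n.
Let S a b := d a (d b (U c e)) - \sum_(k<n) Gam k a b * cov02 U k c e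
  - \sum_(k<n) (Gam k b c * d a (U k e) + Gam k a c * d b (U k e))
  - \sum_(k<n) (Gam k b e * d a (U c k) + Gam k a e * d b (U c k))
  + (\sum_(k<n) \sum_(m<n) Gam k a c * (Gam m b e * U k m)
     + \sum_(k<n) \sum_(m<n) Gam k a e * (Gam m b c * U m k)).
Let N a b := - \sum_(k<n) d a (Gam k b c) * U k e - \sum_(k<n) d a (Gam k b e) * U c k
  + \sum_(k<n) \sum_(m<n) Gam k a c * (Gam m b k * U m e)
  + \sum_(k<n) \sum_(m<n) Gam k a e * (Gam m b k * U c m).

Lemma R2split a b : cov03 d Gam (cov02 U) a b c e = S a b + N a b.
Proof.
rewrite /cov03 {1}/cov02 !dB !dS /S /N.
have E1 : \sum_(k<n) d a (Gam k b c * U k e) = \sum_(k<n) d a (Gam k b c) * U k e + \sum_(k<n) Gam k b c * d a (U k e).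
  by rewrite -big_split; apply: eq_bigr => k _; rewrite dM.
have E2 : \sum_(k<n) d a (Gam k b e * U c k) = \sum_(k<n) d a (Gam k b e) * U c k + \sum_(k<n) Gam k b e * d a (U c k).
  by rewrite -big_split; apply: eq_bigr => k _; rewrite dM.
have E3 : \sum_(k<n) Gam k a c * cov02 U b k e = \sum_(k<n) Gam k a c * d b (U k e)
   - \sum_(k<n) \sum_(m<n) Gam k a c * (Gam m b k * U m e) - \sum_(k<n) \sum_(m<n) Gam k a c * (Gam m b e * U k m).
  by rewrite -!sumrB; apply: eq_bigr => k _; rewrite /cov02 !mulrBr !mulr_sumr.
have E4 : \sum_(k<n) Gam k a e * cov02 U b c k = \sum_(k<n) Gam k a e * d b (U c k)
   - \sum_(k<n) \sum_(m<n) Gam k a e * (Gam m b c * U m k) - \sum_(k<n) \sum_(m<n) Gam k a e * (Gam m b k * U c m).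
  by rewrite -!sumrB; apply: eq_bigr => k _; rewrite /cov02 !mulrBr !mulr_sumr.
rewrite E1 E2 E3 E4 !big_split /=. aring.
Qed.

Lemma S_sym a b : S a b = S b a.
Proof.
rewrite /S dC.
have h1 : \sum_(k<n) Gam k a b * cov02 U k c e = \sum_(k<n) Gam k b a * cov02 U k c e
  by apply: eq_bigr => k _; rewrite hsym.
have h2 : \sum_(k<n) (Gam k b c * d a (U k e) + Gam k a c * d b (U k e)) = \sum_(k<n) (Gam k a c * d b (U k e) + Gam k b c * d a (U k e))
  by apply: eq_bigr => k _; rewrite addrC.
have h3 : \sum_(k<n) (Gam k b e * d a (U c k) + Gam k a e * d b (U c k)) = \sum_(k<n) (Gam k a e * d b (U c k) + Gam k b e * d a (U c k))
  by apply: eq_bigr => k _; rewrite addrC.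
have h4 : forall x y, \sum_(k<n) \sum_(m<n) Gam k x c * (Gam m y e * U k m) = \sum_(k<n) \sum_(m<n) Gam k y e * (Gam m x c * U m k).
  move=> x y; rewrite exchange_big /=; apply: eq_bigr => k _; apply: eq_bigr => m _; aring.
rewrite h1 h2 h3 !h4. aring.
Qed.

Lemma R2 a b : cov03 d Gam (cov02 U) a b c e - cov03 d Gam (cov02 U) b a c e =
  - \sum_(k<n) R a b c k * U k e - \sum_(k<n) R a b e k * U c k.
Proof.
rewrite !R2split (S_sym b a) (RexpL a b c (fun m => U m e)) (RexpL a b e (fun m => U c m)) /N.
aring.
Qed.
End R2.

Lemma B1 a b c f : R a b c f + R b c a f + R c a b f = 0.
Proof.
rewrite /Riem.
have h1 : \sum_(k<n) Gam f b k * Gam k c a = \sum_(k<n) Gam k a c * Gam f b k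
  by apply: eq_bigr => k _; rewrite (hsym k c a) mulrC.
have h2 : \sum_(k<n) Gam f c k * Gam k a b = \sum_(k<n) Gam k b a * Gam f c k
  by apply: eq_bigr => k _; rewrite (hsym k a b) mulrC.
have h3 : \sum_(k<n) Gam f a k * Gam k b c = \sum_(k<n) Gam k c b * Gam f a k
  by apply: eq_bigr => k _; rewrite (hsym k b c) mulrC.
rewrite h1 h2 h3 (hsym f c a) (hsym f b a) (hsym f c b). aring.
Qed.

Lemma Ranti a b c e : R b a c e = - R a b c e.
Proof.
rewrite /Riem.
have h1 : \sum_(k<n) Gam k b c * Gam e a k = \sum_(k<n) Gam e a k * Gam k b c
  by apply: eq_bigr => k _; rewrite mulrC.
have h2 : \sum_(k<n) Gam e b k * Gam k a c = \sum_(k<n) Gam k a c * Gam e b k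
  by apply: eq_bigr => k _; rewrite mulrC.
rewrite h1 h2. aring.
Qed.

Lemma Leib (Rm : 'I_n -> 'I_n -> 'I_n -> 'I_n -> A) (w : 'I_n -> A) a b c e :
  cov03 d Gam (fun b c e => \sum_(k<n) Rm b c e k * w k) a b c e =
  \sum_(k<n) cov31 d Gam Rm a b c e k * w k + \sum_(k<n) Rm b c e k * cov01 w a k.
Proof.
have H1 : \sum_(k<n) cov31 d Gam Rm a b c e k * w k = \sum_(k<n) d a (Rm b c e k) * w k
   - \sum_(k<n) \sum_(m<n) Gam m a b * Rm m c e k * w k
   - \sum_(k<n) \sum_(m<n) Gam m a c * Rm b m e k * w k
   - \sum_(k<n) \sum_(m<n) Gam m a e * Rm b c m k * w k
   + \sum_(k<n) \sum_(m<n) Gam k a m * Rm b c e m * w k.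
  rewrite -!sumrB -big_split /=; apply: eq_bigr => k _.
  by rewrite /cov31 !mulrDl !mulNr !mulr_suml.
have H2 : \sum_(k<n) Rm b c e k * cov01 w a k = \sum_(k<n) Rm b c e k * d a (w k)
   - \sum_(k<n) \sum_(m<n) Gam k a m * Rm b c e m * w k.
  rewrite exchange_big /= -sumrB; apply: eq_bigr => k _.
  rewrite /cov01 mulrBr mulr_sumr; congr (_ - _); apply: eq_bigr => m _; aring.
have H3 : \sum_(k<n) d a (Rm b c e k * w k) = \sum_(k<n) d a (Rm b c e k) * w k + \sum_(k<n) Rm b c e k * d a (w k).
  by rewrite -big_split; apply: eq_bigr => k _; rewrite dM.
have H4 : forall (F : 'I_n -> A) (G : 'I_n -> 'I_n -> A),
   \sum_(k<n) F k * (\sum_(m<n) G k m * w m) = \sum_(k<n) \sum_(m<n) F m * G m k * w k.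
  move=> F G; rewrite exchange_big /=; apply: eq_bigr => k _; rewrite mulr_sumr.
  by apply: eq_bigr => m _; rewrite mulrA.
rewrite /cov03 dS H1 H2 H3 !H4. aring.
Qed.

Lemma cov03_ext (T1 T2 : 'I_n -> 'I_n -> 'I_n -> A) a b c e :
  (forall x y z, T1 x y z = T2 x y z) -> cov03 d Gam T1 a b c e = cov03 d Gam T2 a b c e.
Proof.
move=> H; rewrite /cov03 H.
have h1 : forall (F : 'I_n -> 'I_n -> 'I_n -> 'I_n -> A), \sum_(k<n) F k a b c * T1 k c e = \sum_(k<n) F k a b c * T2 k c e.
  by move=> F; apply: eq_bigr => k _; rewrite H.
have h2 : \sum_(k<n) Gam k a c * T1 b k e = \sum_(k<n) Gam k a c * T2 b k e by apply: eq_bigr => k _; rewrite H.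
have h3 : \sum_(k<n) Gam k a e * T1 b c k = \sum_(k<n) Gam k a e * T2 b c k by apply: eq_bigr => k _; rewrite H.
have h4 : \sum_(k<n) Gam k a b * T1 k c e = \sum_(k<n) Gam k a b * T2 k c e by apply: eq_bigr => k _; rewrite H.
by rewrite h2 h3 h4.
Qed.

Lemma cov03_sub (T1 T2 : 'I_n -> 'I_n -> 'I_n -> A) a b c e :
  cov03 d Gam (fun x y z => T1 x y z - T2 x y z) a b c e = cov03 d Gam T1 a b c e - cov03 d Gam T2 a b c e.
Proof.
rewrite /cov03 dB.
have h : forall (F G : 'I_n -> A), \sum_(k<n) F k * (G k) = \sum_(k<n) F k * G k by [].
have hs : forall (F G H : 'I_n -> A), \sum_(k<n) F k * (G k - H k) = \sum_(k<n) F k * G k - \sum_(k<n) F k * H k.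
  by move=> F G H; rewrite -sumrB; apply: eq_bigr => k _; rewrite mulrBr.
rewrite !hs. aring.
Qed.

Lemma cov03_neg (T : 'I_n -> 'I_n -> 'I_n -> A) a b c e :
  cov03 d Gam (fun x y z => - T x y z) a b c e = - cov03 d Gam T a b c e.
Proof.
rewrite /cov03 dN.
have hs : forall (F G : 'I_n -> A), \sum_(k<n) F k * (- G k) = - \sum_(k<n) F k * G k.
  by move=> F G; rewrite -sumrN; apply: eq_bigr => k _; rewrite mulrN.
rewrite !hs. aring.
Qed.

Lemma cov03_swap (T : 'I_n -> 'I_n -> 'I_n -> A) a b c e :
  cov03 d Gam (fun x y z => T y x z) a b c e = cov03 d Gam T a c b e.
Proof. rewrite /cov03. aring. Qed.

Section B2.
Variable w : 'I_n -> A.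
Let W := cov01 w.
Let Y := cov03 d Gam (cov02 W).

Lemma FactA a b c e : Y a b c e = Y b a c e - \sum_(k<n) R a b c k * W k e - \sum_(k<n) R a b e k * W c k.
Proof. have := R2 W c e a b; rewrite -/Y => H. rewrite -[Y a b c e](subrK (Y b a c e)) H. aring. Qed.

Lemma FactB a b c e : \sum_(k<n) cov31 d Gam R a b c e k * w k =
  - (Y a b c e - Y a c b e) - \sum_(k<n) R b c e k * W a k.
Proof.
rewrite /Y -(cov03_swap (cov02 W) a b c e) -cov03_sub.
rewrite (@cov03_ext _ (fun x y z => - \sum_(m<n) R x y z m * w m)); last first.
  by move=> x y z; rewrite /W /=; exact: R1.
rewrite cov03_neg Leib opprK /W. aring.
Qed.

Lemma B2w a b c e : \sum_(k<n) (cov31 d Gam R a b c e k + cov31 d Gam R b c a e k + cov31 d Gam R c a b e k) * w k = 0.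
Proof.
have zero : \sum_(k<n) R a b c k * W k e + \sum_(k<n) R b c a k * W k e + \sum_(k<n) R c a b k * W k e = 0.
  rewrite -!big_split /=; apply: big1 => k _; rewrite -!mulrDl B1 mul0r //.
have sp : \sum_(k<n) (cov31 d Gam R a b c e k + cov31 d Gam R b c a e k + cov31 d Gam R c a b e k) * w k =
  \sum_(k<n) cov31 d Gam R a b c e k * w k + \sum_(k<n) cov31 d Gam R b c a e k * w k + \sum_(k<n) cov31 d Gam R c a b e k * w k.
  by rewrite -!big_split /=; apply: eq_bigr => k _; rewrite !mulrDl.
rewrite sp !FactB (FactA a b c) (FactA b c a) (FactA c a b).
rewrite -[RHS]zero. aring.
Qed.
End B2.

Lemma sum_delta (F : 'I_n -> A) f : \sum_(k<n) F k * (k == f)%:R = F f.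
Proof.
rewrite (bigD1 f) //= eqxx mulr1 big1 ?addr0 //.
move=> k /negbTE ->; by rewrite mulr0.
Qed.

Lemma B2 a b c e f : cov31 d Gam R a b c e f + cov31 d Gam R b c a e f + cov31 d Gam R c a b e f = 0.
Proof.
have := B2w (fun k => (k == f)%:R) a b c e; by rewrite sum_delta.
Qed.

Lemma cov31anti a y z e f : cov31 d Gam R a y z e f = - cov31 d Gam R a z y e f.
Proof.
rewrite /cov31 (Ranti z y e f).
have h1 : \sum_(k<n) Gam k a z * R k y e f = - \sum_(k<n) Gam k a z * R y k e f
  by rewrite -sumrN; apply: eq_bigr => k _; rewrite Ranti mulrN.
have h2 : \sum_(k<n) Gam k a y * R z k e f = - \sum_(k<n) Gam k a y * R k z e f
  by rewrite -sumrN; apply: eq_bigr => k _; rewrite Ranti mulrN.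
have h3 : \sum_(k<n) Gam k a e * R z y k f = - \sum_(k<n) Gam k a e * R y z k f
  by rewrite -sumrN; apply: eq_bigr => k _; rewrite Ranti mulrN.
have h4 : \sum_(k<n) Gam f a k * R z y e k = - \sum_(k<n) Gam f a k * R y z e k
  by rewrite -sumrN; apply: eq_bigr => k _; rewrite Ranti mulrN.
rewrite h1 h2 h3 h4 dN. aring.
Qed.

Notation Ric := (Ricci d Gam).

Lemma contr b c e : \sum_(m<n) cov31 d Gam R b c m e m = cov02 Ric b c e.
Proof.
have L : \sum_(m<n) cov31 d Gam R b c m e m = \sum_(m<n) d b (R c m e m)
  - \sum_(m<n) \sum_(k<n) Gam k b c * R k m e m - \sum_(m<n) \sum_(k<n) Gam k b m * R c k e m
  - \sum_(m<n) \sum_(k<n) Gam k b e * R c m k m + \sum_(m<n) \sum_(k<n) Gam m b k * R c m e k.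
  by rewrite -!sumrB -big_split /=; apply: eq_bigr => m _.
have h1 : \sum_(m<n) \sum_(k<n) Gam k b m * R c k e m = \sum_(m<n) \sum_(k<n) Gam m b k * R c m e k
  by rewrite exchange_big.
have h2 : forall x y, \sum_(m<n) \sum_(k<n) Gam k b x * R y m k m = \sum_(k<n) Gam k b x * Ric y k.
  by move=> x y; rewrite exchange_big /=; apply: eq_bigr => k _; rewrite /Ricci mulr_sumr.
have h3 : \sum_(m<n) \sum_(k<n) Gam k b c * R k m e m = \sum_(k<n) Gam k b c * Ric k e.
  by rewrite exchange_big /=; apply: eq_bigr => k _; rewrite /Ricci mulr_sumr.
rewrite L h1 h2 h3 /cov02 [Ric c e]/Ricci dS. aring.
Qed.

Lemma divE b c e : divRiem d Gam b c e = cov02 Ric c b e - cov02 Ric b c e.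
Proof.
rewrite /divRiem -contr -contr -sumrB; apply: eq_bigr => m _.
have := B2 m b c e m; rewrite (cov31anti c m b) => H.
rewrite -[LHS]subr0 -H. aring.
Qed.

Lemma main a b c e :
  cov03 d Gam (divRiem d Gam) a b c e
  + cov03 d Gam (divRiem d Gam) b c a e
  + cov03 d Gam (divRiem d Gam) c a b e
  = \sum_(m < n) Ric a m * R b c e m
  + \sum_(m < n) Ric b m * R c a e m
  + \sum_(m < n) Ric c m * R a b e m.
Proof.
have D : forall x y z, cov03 d Gam (divRiem d Gam) x y z e = cov03 d Gam (cov02 Ric) x z y e - cov03 d Gam (cov02 Ric) x y z e.
  move=> x y z.
  rewrite (@cov03_ext _ (fun p q r => (fun p q r => cov02 Ric q p r) p q r - cov02 Ric p q r)); last first.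
    by move=> p q r; rewrite divE.
  by rewrite cov03_sub cov03_swap.
have FA : forall x y z, cov03 d Gam (cov02 Ric) x y z e = cov03 d Gam (cov02 Ric) y x z e
   - \sum_(k<n) R x y z k * Ric k e - \sum_(k<n) R x y e k * Ric z k.
  move=> x y z; have := R2 Ric z e x y => H.
  rewrite -[cov03 d Gam (cov02 Ric) x y z e](subrK (cov03 d Gam (cov02 Ric) y x z e)) H. aring.
have zero : \sum_(k<n) R a b c k * Ric k e + \sum_(k<n) R b c a k * Ric k e + \sum_(k<n) R c a b k * Ric k e = 0.
  rewrite -!big_split /=; apply: big1 => k _; rewrite -!mulrDl B1 mul0r //.
have C : forall x y z, \sum_(m<n) Ric x m * R y z e m = \sum_(k<n) R y z e k * Ric x k
  by move=> x y z; apply: eq_bigr => k _; rewrite mulrC.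
rewrite !D (FA a b c) (FA b c a) (FA c a b) !C.
rewrite -[X in _ = X]addr0 -[X in _ = _ + X]zero. aring.
Qed.

End Main.

Theorem mainTheorem3 (A : comRingType) (n : nat) (d : 'I_n -> A -> A)
  (Gam : 'I_n -> 'I_n -> 'I_n -> A)
  (hd : commuting_derivations d) (hsym : symmetric_connection Gam)
  (a b c e : 'I_n) :
  cov03 d Gam (divRiem d Gam) a b c e
  + cov03 d Gam (divRiem d Gam) b c a e
  + cov03 d Gam (divRiem d Gam) c a b e
  = \sum_(m < n) Ricci d Gam a m * Riem d Gam b c e m
  + \sum_(m < n) Ricci d Gam b m * Riem d Gam c a e m
  + \sum_(m < n) Ricci d Gam c m * Riem d Gam a b e m.
Proof. exact: (@main A n d Gam hd hsym a b c e). Qed.
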